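(* Let $g$ be a semi-consistent piece-wise quadratic function with breakpoints $-\infty=\tau_0<\tau_1<\dots<\tau_N=+\infty$ and pieces $p_1,\dots,p_N$. For any $1\le k<l\le N$, the pieces $k$ and $l$ have at most one feasible common tangent.
   Context: A continuous $g$ is piece-wise quadratic with $N$ pieces if $g=p_k$ on $[\tau_{k-1},\tau_k]$ for quadratic $p_k$ with $p_k\ne p_{k+1}$. Indexing function of piece-wise quadratic $h$ with strongly convex pieces: $I_h(\beta)=\min\{k:\exists\,\alpha^\star\in\arg\max_\alpha\{\beta\alpha-h(\alpha)\},\ \tau_{k-1}\le\alpha^\star\le\tau_k\}$. $g$ is semi-consistent if: (i) all $p_k$ are strongly convex; (ii) $p_k(\alpha)\le\min\{p_{k-1}(\alpha),p_{k+1}(\alpha)\}$ for $\alpha\in[\tau_{k-1},\tau_k]$, $2\le k\le N-1$; (iii) for every $k\le N$, $I_{g_k}$ is non-decreasing, where $g_k=g$ on $(-\infty,\tau_k]$ and $g_k=p_k$ on $(\tau_k,\infty)$. For $1\le k<l\le N$, a feasible common tangent to pieces $k$ and $l$ is a slope $s\in\mathbb{R}$ such that some line $\ell(\alpha)=s\alpha+b$ is tangent to $p_k$ at some $\alpha_k\in[\tau_{k-1},\tau_k]$ and tangent to $p_l$ at some $\alpha_l\in[\tau_{l-1},\tau_l]$ (i.e. $\ell(\alpha_k)=p_k(\alpha_k)$, $p_k'(\alpha_k)=s$, $\ell(\alpha_l)=p_l(\alpha_l)$, $p_l'(\alpha_l)=s$). *)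

(* Defs.v *)
From HB Require Import structures.
From mathcomp Require Import all_boot all_order all_algebra.
From mathcomp Require Import reals.
Set Implicit Arguments. Unset Strict Implicit. Unset Printing Implicit Defensive.
Import Order.TTheory GRing.Theory Num.Theory.
Local Open Scope ring_scope.

(* A piece-wise quadratic function with n pieces is encoded by
   - breakpoints tau : nat -> R, only tau 1, ..., tau (n-1) are used
     (tau 0 = -oo and tau n = +oo are implicit),
   - coefficients a b c : nat -> R, piece j (1 <= j <= n) being
     p_j(x) = a j * x^2 + b j * x + c j. *)

Section PWQ.
Variable R : realType.

Definition quad (a b c : nat -> R) (j : nat) (x : R) : R :=
  a j * x ^+ 2 + b j * x + c j.

Definition dquad (a b : nat -> R) (j : nat) (x : R) : R :=
  2%:R * a j * x + b j.

Definition in_piece (n : nat) (tau : nat -> R) (j : nat) (x : R) : Prop :=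
  ((1 < j)%N -> tau j.-1 <= x) /\ ((j < n)%N -> x <= tau j).

Fixpoint pidx_aux (tau : nat -> R) (x : R) (m j : nat) : nat :=
  match m with
  | 0 => j
  | m'.+1 => if x <= tau j then j else pidx_aux tau x m' j.+1
  end.

Definition pidx (n : nat) (tau : nat -> R) (x : R) : nat :=
  pidx_aux tau x n.-1 1.

(* the piece-wise quadratic function itself: g(x) = p_j(x) for the
   first piece j whose interval contains x (well defined by continuity) *)
Definition pwq (n : nat) (tau : nat -> R) (a b c : nat -> R) (x : R) : R :=
  quad a b c (pidx n tau x) x.

Definition is_pwq (n : nat) (tau : nat -> R) (a b c : nat -> R) : Prop :=
  (1 <= n)%N /\
  (forall k, (1 <= k)%N -> (k.+1 < n)%N -> tau k < tau k.+1) /\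
  (forall k, (1 <= k)%N -> (k < n)%N ->
     quad a b c k (tau k) = quad a b c k.+1 (tau k)) /\
  (forall k, (1 <= k)%N -> (k < n)%N ->
     (a k, b k, c k) <> (a k.+1, b k.+1, c k.+1)).

Definition is_argmax (h : R -> R) (beta x : R) : Prop :=
  forall y, beta * y - h y <= beta * x - h x.

Definition index_fun (n : nat) (tau : nat -> R) (a b c : nat -> R)
    (beta : R) (j : nat) : Prop :=
  let h := pwq n tau a b c in
  [/\ (1 <= j <= n)%N,
      (exists x, is_argmax h beta x /\ in_piece n tau j x) &
      (forall j', (1 <= j')%N -> (j' < j)%N ->
         ~ exists x, is_argmax h beta x /\ in_piece n tau j' x)].

Definition index_nondecreasing (n : nat) (tau : nat -> R) (a b c : nat -> R)
  : Prop :=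
  forall beta1 beta2 j1 j2, beta1 <= beta2 ->
    index_fun n tau a b c beta1 j1 -> index_fun n tau a b c beta2 j2 ->
    (j1 <= j2)%N.

(* g_k = g on (-oo, tau_k], p_k on (tau_k, +oo): this is the piece-wise
   quadratic function with the first k pieces of g (last one unbounded). *)
Definition semi_consistent (n : nat) (tau : nat -> R) (a b c : nat -> R)
  : Prop :=
  [/\ (forall k, (1 <= k <= n)%N -> 0 < a k),
      (forall k, (2 <= k)%N -> (k.+1 <= n)%N -> forall x,
         in_piece n tau k x ->
         quad a b c k x <= Num.min (quad a b c k.-1 x) (quad a b c k.+1 x)) &
      (forall k, (1 <= k <= n)%N -> index_nondecreasing k tau a b c)].

Definition feasible_common_tangent (n : nat) (tau : nat -> R)
    (a b c : nat -> R) (k l : nat) (s : R) : Prop :=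
  exists (b0 xk xl : R),
    [/\ in_piece n tau k xk, in_piece n tau l xl,
        s * xk + b0 = quad a b c k xk /\ dquad a b k xk = s &
        s * xl + b0 = quad a b c l xl /\ dquad a b l xl = s].

End PWQ.

(* Main.v *)
Require Import Defs.
From HB Require Import structures.
From mathcomp Require Import all_boot all_order all_algebra.
From mathcomp Require Import reals.
From mathcomp Require Import ring lra zify.
Import Order.TTheory GRing.Theory Num.Theory.
Local Open Scope ring_scope.

Lemma alg_key (R : realFieldType) (ak bk ck al bl cl xk xl yk yl : R) :
  0 < ak -> 0 < al ->
  2%:R * ak * xk + bk = 2%:R * al * xl + bl ->
  2%:R * ak * yk + bk = 2%:R * al * yl + bl ->
  ck - ak * xk ^+ 2 = cl - al * xl ^+ 2 ->
  ck - ak * yk ^+ 2 = cl - al * yl ^+ 2 ->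
  xk <= xl -> yk <= yl ->
  xk = yk \/ [/\ xk = xl, ak = al, bk = bl & ck = cl].
Proof.
move=> hak hal H1 H2 H3 H4 hx hy.
have [->|hu] := eqVneq xk yk; first by left.
right.
have Huv : ak * (xk - yk) = al * (xl - yl) by lra.
have Hsq : ak * (xk - yk) * (xk + yk) = al * (xl - yl) * (xl + yl).
  have -> : ak * (xk - yk) * (xk + yk) = ak * xk ^+ 2 - ak * yk ^+ 2 by ring.
  have -> : al * (xl - yl) * (xl + yl) = al * xl ^+ 2 - al * yl ^+ 2 by ring.
  lra.
rewrite -Huv in Hsq.
have hne : ak * (xk - yk) != 0.
  by rewrite mulf_neq0 ?subr_eq0 // gt_eqF.
have Hs : xk + yk = xl + yl.
  by apply: (mulfI hne).
have ex : xk = xl by lra.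
have ey : yk = yl by lra.
subst xl yl.
have ea : ak = al.
  apply: (mulIf (x := xk - yk)); first by rewrite subr_eq0.
  by [].
subst al.
have eb : bk = bl by lra.
subst bl.
split=> //.
lra.
Qed.

Lemma tau_mono (R : realType) (N : nat) (tau : nat -> R) k :
  (1 <= k)%N ->
  (forall k, (1 <= k)%N -> (k.+1 < N)%N -> tau k < tau k.+1) ->
  forall m, (k + m < N)%N -> tau k <= tau (k + m)%N.
Proof.
move=> hk hT; elim=> [|m IH] h; first by rewrite (_ : (k + 0 = k)%N) //; lia.
apply: le_trans (IH _) _; first lia.
rewrite (_ : (k + m.+1 = (k + m).+1)%N); last lia.
apply/ltW/hT; lia.
Qed.

Theorem lemma9 (R : realType) (N : nat) (tau : nat -> R) (a b c : nat -> R) :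
  is_pwq N tau a b c ->
  semi_consistent N tau a b c ->
  forall k l : nat, (1 <= k)%N -> (k < l)%N -> (l <= N)%N ->
  forall s1 s2 : R,
    feasible_common_tangent N tau a b c k l s1 ->
    feasible_common_tangent N tau a b c k l s2 ->
    s1 = s2.
Proof.
move=> [hN [hT [hC hD]]] [hpos _ _] k l hk hkl hlN s1 s2.
move=> [b1 [xk [xl [[_ hxk] [hxl _] [e1 d1] [e2 d2]]]]].
move=> [b2 [yk [yl [[_ hyk] [hyl _] [f1 g1] [f2 g2]]]]].
move: e1 d1 e2 d2 f1 g1 f2 g2; rewrite /quad /dquad => e1 d1 e2 d2 f1 g1 f2 g2.
have hak : 0 < a k by apply: hpos; lia.
have hal : 0 < a l by apply: hpos; lia.
have hkN : (k < N)%N by lia.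
have hl1 : (1 < l)%N by lia.
have xk_le : xk <= tau k by exact: hxk hkN.
have yk_le : yk <= tau k by exact: hyk hkN.
have xl_ge : tau l.-1 <= xl by exact: hxl hl1.
have yl_ge : tau l.-1 <= yl by exact: hyl hl1.
have tkl : tau k <= tau l.-1.
  have := @tau_mono R N tau k hk hT (l.-1 - k)%N.
  have -> : (k + (l.-1 - k))%N = l.-1 by lia.
  apply; lia.
have P1 : 2%:R * a k * xk + b k = 2%:R * a l * xl + b l by lra.
have P2 : 2%:R * a k * yk + b k = 2%:R * a l * yl + b l by lra.
have P3 : c k - a k * xk ^+ 2 = c l - a l * xl ^+ 2.
  have -> : c k - a k * xk ^+ 2 = b1 by rewrite (_ : b1 = a k * xk ^+ 2 + b k * xk + c k - s1 * xk); [rewrite -d1; ring | lra].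
  have -> : c l - a l * xl ^+ 2 = b1 by rewrite (_ : b1 = a l * xl ^+ 2 + b l * xl + c l - s1 * xl); [rewrite -d2; ring | lra].
  by [].
have P4 : c k - a k * yk ^+ 2 = c l - a l * yl ^+ 2.
  have -> : c k - a k * yk ^+ 2 = b2 by rewrite (_ : b2 = a k * yk ^+ 2 + b k * yk + c k - s2 * yk); [rewrite -g1; ring | lra].
  have -> : c l - a l * yl ^+ 2 = b2 by rewrite (_ : b2 = a l * yl ^+ 2 + b l * yl + c l - s2 * yl); [rewrite -g2; ring | lra].
  by [].
have P5 : xk <= xl by lra.
have P6 : yk <= yl by lra.
have [exy|[ex ea eb ec]] := @alg_key R (a k) (b k) (c k) (a l) (b l) (c l) xk xl yk yl hak hal P1 P2 P3 P4 P5 P6.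
- by rewrite -d1 -g1 exy.
- exfalso; subst xl.
  have [hl|hl] : l = k.+1 \/ (k.+1 < l)%N by lia.
  + subst l.
    apply: (hD k hk hkN); by rewrite ea eb ec.
  + have t2 : tau k < tau k.+1 by apply: hT; lia.
    have := @tau_mono R N tau k.+1 ltac:(lia) hT (l.-1 - k.+1)%N.
    have -> : (k.+1 + (l.-1 - k.+1))%N = l.-1 by lia.
    move=> /(_ ltac:(lia)) t3.
    have := lt_le_trans t2 t3; rewrite ltNge.
    by rewrite (le_trans xl_ge xk_le).
Qed.
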